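(* Let $M\in\mathbb{R}^{n\times n}$ be a P-matrix. Then $M$ is a K-matrix if and only if for every $q\in\mathbb{R}^n$ such that $(M,q)$ is nondegenerate, the USO induced by $\mathrm{LCP}(M,q)$ is locally uniform.
   Context: For $v\in\{0,1\}^n$ and $I\subseteq[n]$, $v\oplus I$ flips the coordinates of $v$ in $I$; $v\oplus i=v\oplus\{i\}$. The $n$-cube has vertex set $\{0,1\}^n$ and edges $\{v,v\oplus i\}$; a unique-sink orientation (USO) is an orientation in which every subcube has exactly one sink. A P-matrix is a square real matrix with all principal minors positive; a K-matrix is a P-matrix whose off-diagonal entries are all non-positive. For $B\subseteq[n]$, $A_B$ is the matrix whose $i$th column is the $i$th column of $-M$ if $i\in B$ and of $I_n$ otherwise; $B(v)=\{j:v_j=1\}$. $(M,q)$ is nondegenerate if $(A_B^{-1}q)_i\ne0$ for all $B,i$; the USO induced by $\mathrm{LCP}(M,q)$ is given by $v\to v\oplus i$ iff $(A_{B(v)}^{-1}q)_i<0$. A USO is locally uniform if (i) whenever $u_i=u_j=0$ ($i\ne j$), $u\to u\oplus i$ and $u\to u\oplus j$, then $u\oplus i\to u\oplus\{i,j\}$ and $u\oplus j\to u\oplus\{i,j\}$; and (ii) whenever $u_i=u_j=0$, $u\oplus i\to u$ and $u\oplus j\to u$, then $u\oplus\{i,j\}\to u\oplus i$ and $u\oplus\{i,j\}\to u\oplus j$. *)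

(* Defs.v *)
From HB Require Import structures.
From mathcomp Require Import all_boot all_order all_algebra.
Set Implicit Arguments. Unset Strict Implicit. Unset Printing Implicit Defensive.
Import Order.TTheory GRing.Theory Num.Theory.
Local Open Scope ring_scope.

Section Defs.
Variables (R : realFieldType) (n : nat).

Definition principal_minor (M : 'M[R]_n) (S : {set 'I_n}) : R :=
  \det (mxsub (@enum_val _ (mem S)) (@enum_val _ (mem S)) M).

Definition P_matrix (M : 'M[R]_n) : Prop :=
  forall S : {set 'I_n}, 0 < principal_minor M S.

Definition K_matrix (M : 'M[R]_n) : Prop :=
  P_matrix M /\ (forall i j : 'I_n, i != j -> M i j <= 0).

Definition vertex := {ffun 'I_n -> bool}.

Definition flip (v : vertex) (i : 'I_n) : vertex :=
  [ffun j => if j == i then ~~ v j else v j].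

Definition Bset (v : vertex) : {set 'I_n} := [set j | v j].

Definition A_mat (M : 'M[R]_n) (B : {set 'I_n}) : 'M[R]_n :=
  \matrix_(i, j) (if j \in B then - M i j else (i == j)%:R).

Definition Ainvq (M : 'M[R]_n) (q : 'cV[R]_n) (B : {set 'I_n}) : 'cV[R]_n :=
  invmx (A_mat M B) *m q.

Definition lcp_nondegenerate (M : 'M[R]_n) (q : 'cV[R]_n) : Prop :=
  forall (B : {set 'I_n}) (i : 'I_n), Ainvq M q B i 0 != 0.

(* an orientation of the cube: o v i  <->  v -> v (+) i *)
Definition orientation := vertex -> 'I_n -> bool.

Definition lcp_orientation (M : 'M[R]_n) (q : 'cV[R]_n) : orientation :=
  fun v i => Ainvq M q (Bset v) i 0 < 0.

Definition locally_uniform (o : orientation) : Prop :=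
  forall (u : vertex) (i j : 'I_n), i != j -> u i = false -> u j = false ->
    ((o u i -> o u j -> o (flip u i) j /\ o (flip u j) i) /\
     (o (flip u i) i -> o (flip u j) j ->
        o (flip (flip u i) j) j /\ o (flip (flip u i) j) i)).
End Defs.

(* Main.v *)
Require Import Defs.
From HB Require Import structures.
From mathcomp Require Import all_boot all_order all_algebra fingroup perm.
Set Implicit Arguments. Unset Strict Implicit. Unset Printing Implicit Defensive.
Import Order.TTheory GRing.Theory Num.Theory.
Local Open Scope ring_scope.

Section Aux.
Variable R : realFieldType.

Lemma det_mxsub_inj (m n : nat) (e : m = n) (g : 'I_m -> 'I_n) (A : 'M[R]_n) :
  injective g -> \det (mxsub g g A) = \det A.
Proof.
subst n => ginj; pose s := perm ginj.
have -> : mxsub g g A = row_perm s (col_perm s A).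
  by apply/matrixP => i j; rewrite !mxE !permE.
rewrite row_permE col_permE !det_mulmx !det_perm odd_permV.
by rewrite mulrC -mulrA -expr2 sqrr_sign mulr1.
Qed.

Variable n : nat.

Lemma det_A_mat (M : 'M[R]_n) (B : {set 'I_n}) :
  \det (A_mat M B) = (-1) ^+ #|B| * principal_minor M B.
Proof.
pose f := @enum_val _ (mem B).
pose f' := @enum_val _ (mem (~: B)).
pose g (x : 'I_(#|B| + #|~: B|)) : 'I_n :=
  match split x with inl a => f a | inr b => f' b end.
have ginj : injective g.
  move=> x y; rewrite /g -{2}(splitK x) -{2}(splitK y).
  case: (split x) => a; case: (split y) => b //= E.
  - by rewrite (enum_val_inj E).
  - by have := enum_valP b; rewrite -/f' -E in_setC (enum_valP a).
  - by have := enum_valP a; rewrite -/f' E in_setC (enum_valP b).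
  - by rewrite (enum_val_inj E).
have e : (#|B| + #|~: B|)%N = n by rewrite cardsC card_ord.
rewrite -(det_mxsub_inj e (A_mat M B) ginj).
have -> : mxsub g g (A_mat M B) =
   block_mx (- mxsub f f M) 0 (mxsub f' f (A_mat M B)) 1%:M.
  apply/matrixP => r s; rewrite -(splitK r) -(splitK s).
  case: (split r) => a; case: (split s) => b.
  - by rewrite block_mxEul !mxE /g !unsplitK (enum_valP b).
  - rewrite block_mxEur !mxE /g !unsplitK.
    have := enum_valP b; rewrite in_setC => /negbTE ->.
    case: eqP => // E; have := enum_valP b.
    by rewrite -/f' -E in_setC (enum_valP a).
  - by rewrite block_mxEdl !mxE /g !unsplitK.
  - rewrite block_mxEdr !mxE /g !unsplitK.
    have := enum_valP b; rewrite in_setC => /negbTE ->.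
    by rewrite (inj_eq enum_val_inj).
rewrite det_lblock det1 mulr1 -scaleN1r detZ.
by [].
Qed.

Lemma A_unit (M : 'M[R]_n) B : P_matrix M -> A_mat M B \in unitmx.
Proof.
move=> PM; rewrite unitmxE unitfE det_A_mat mulf_neq0 ?signr_eq0 //.
by rewrite gt_eqF.
Qed.

Lemma AinvqK (M : 'M[R]_n) B q : P_matrix M -> A_mat M B *m Ainvq M q B = q.
Proof. by move=> PM; rewrite /Ainvq mulmxA mulmxV ?mul1mx // A_unit. Qed.

Lemma Ainvq_uniq (M : 'M[R]_n) B q x : P_matrix M -> A_mat M B *m x = q ->
  Ainvq M q B = x.
Proof. by move=> PM <-; rewrite /Ainvq mulKmx // A_unit. Qed.

Lemma update (M : 'M[R]_n) (B : {set 'I_n}) q (i : 'I_n) : P_matrix M -> i \notin B ->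
  let y := Ainvq M q B in let c := Ainvq M (- col i M) B in
  let x := Ainvq M q (i |: B) in
  [/\ c i 0 < 0, y i 0 = c i 0 * x i 0 &
      forall r, r != i -> y r 0 = x r 0 + c r 0 * x i 0].
Proof.
move=> PM iB y c x.
pose E := \matrix_(r, s) (if s == i then c r 0 else (r == s)%:R) : 'M[R]_n.
have Eentry : forall r s, E r s = if s == i then c r 0 else (r == s)%:R by move=> r s; rewrite /E mxE.
have AE : A_mat M B *m E = A_mat M (i |: B).
  apply/matrixP => r s; rewrite !mxE in_setU1.
  case: (eqVneq s i) => [->|si] /=.
    have := congr1 (fun X : 'cV[R]_n => X r 0) (AinvqK B (- col i M) PM).
    rewrite !mxE => <-; apply: eq_bigr => t _; by rewrite !mxE eqxx.
  rewrite (bigD1 s) //= big1 ?addr0 => [|t ts]; last first.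
    by rewrite !Eentry (negbTE si) (negbTE ts) mulr0.
  by rewrite Eentry (negbTE si) eqxx mulr1 mxE.
have detE : \det E = c i 0.
  rewrite (expand_det_row _ i) (bigD1 i) //= big1 ?addr0 => [|s si]; last first.
    by rewrite !mxE (negbTE si) eq_sym (negbTE si) mul0r.
  rewrite !mxE eqxx /cofactor -signr_odd addnn odd_double expr0 mul1r.
  have -> : row' i (col' i E) = 1%:M.
    apply/matrixP => a b; rewrite !mxE; have /negbTE -> : lift i b != i by rewrite eq_sym neq_lift.
    by rewrite (inj_eq (@lift_inj _ i)).
  by rewrite det1 mulr1.
have Ex : E *m x = y.
  apply/esym/Ainvq_uniq => //; rewrite mulmxA AE AinvqK //.
have ci : c i 0 < 0.
  have := congr1 determinant AE; rewrite det_mulmx detE !det_A_mat cardsU1 iB.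
  rewrite exprS mulN1r => H.
  have pm := PM B; have pm' := PM (i |: B).
  have H2 : principal_minor M B * c i 0 = - principal_minor M (i |: B).
    move: H => /(congr1 (fun t => (-1) ^+ #|B| * t)) /=.
    by rewrite !mulrA -expr2 sqrr_sign mul1r mulrN -expr2 sqrr_sign mulN1r.
  rewrite -(pmulr_rlt0 _ pm) H2 oppr_lt0 //.
split => //.
  rewrite -Ex mxE (bigD1 i) //= big1 ?addr0 => [|t ti]; last first.
    by rewrite !Eentry (negbTE ti) eq_sym (negbTE ti) mul0r.
  by rewrite !Eentry eqxx.
move=> r ri; rewrite -Ex mxE (bigD1 i) //= (bigD1 r) //=.
rewrite big1 ?addr0 => [|t /andP[ti tr]]; last first.
  by rewrite !Eentry (negbTE ti) eq_sym (negbTE tr) mul0r.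
by rewrite !Eentry eqxx (negbTE ri) eqxx mul1r addrC.
Qed.

Lemma A_mat0 (M : 'M[R]_n) : A_mat M set0 = 1%:M.
Proof. by apply/matrixP => r s; rewrite !mxE in_set0. Qed.

Lemma Ainvq0 (M : 'M[R]_n) q : Ainvq M q set0 = q.
Proof. by rewrite /Ainvq A_mat0 invmx1 mul1mx. Qed.

Lemma K_nonneg (M : 'M[R]_n) : K_matrix M -> forall (B : {set 'I_n}) (i j : 'I_n),
  i \notin B -> j \notin B -> j != i -> 0 <= Ainvq M (- col i M) B j 0.
Proof.
case=> PM KM B; move Hk : #|B| => k; elim: k B Hk => [|k IH] B Hk i j iB jB ji.
  by rewrite (cards0_eq Hk) Ainvq0 !mxE oppr_ge0 KM.
have : (0 < #|B|)%N by rewrite Hk.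
rewrite card_gt0 => /set0Pn[l lB].
have Hk' : #|B :\ l| = k by move: Hk; rewrite (cardsD1 l) lB add1n => -[].
have lB' : l \notin B :\ l by rewrite setD11.
have sub : forall t, t \notin B -> t \notin B :\ l.
  by move=> t; apply: contra; rewrite in_setD1 => /andP[].
have li : l != i by apply: contraNneq iB => <-.
have jl : j != l by apply: contraNneq jB => ->.
have [cl yl yr] := update (- col i M) PM lB'.
rewrite setD1K // in yl yr.
have xl : Ainvq M (- col i M) B l 0 <= 0.
  by rewrite -(nmulr_rge0 _ cl) -yl; apply: IH => //; apply: sub.
rewrite (_ : Ainvq M (- col i M) B j 0 = Ainvq M (- col i M) (B:\l) j 0 -
   Ainvq M (- col l M) (B:\l) j 0 * Ainvq M (- col i M) B l 0); last by rewrite yr // addrK.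
rewrite subr_ge0; apply: (le_trans _ (IH _ Hk' i j (sub _ iB) (sub _ jB) ji)).
by apply: mulr_ge0_le0 => //; apply: IH => //; apply: sub.
Qed.

Lemma half (M : 'M[R]_n) q (B : {set 'I_n}) (i j : 'I_n) : K_matrix M ->
  i \notin B -> j \notin B -> i != j ->
  (Ainvq M q B i 0 < 0 -> Ainvq M q B j 0 < 0 -> Ainvq M q (i |: B) j 0 < 0) /\
  (Ainvq M q (i |: B) i 0 < 0 -> Ainvq M q (j |: B) j 0 < 0 ->
     Ainvq M q (i |: (j |: B)) i 0 < 0).
Proof.
move=> KM iB jB ij; have PM := KM.1.
have ji : j != i by rewrite eq_sym.
have [ci yi yr] := update q PM iB.
have [dj yj yr'] := update q PM jB.
have cj := K_nonneg KM iB jB ji.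
have di := K_nonneg KM jB iB ij.
split.
  move=> hi hj; rewrite (_ : Ainvq M q (i |: B) j 0 = Ainvq M q B j 0 -
     Ainvq M (- col i M) B j 0 * Ainvq M q (i |: B) i 0); last by rewrite yr // addrK.
  have xi : 0 < Ainvq M q (i |: B) i 0 by rewrite -(nmulr_rlt0 _ ci) -yi.
  rewrite subr_lt0; apply: (lt_le_trans hj); exact: mulr_ge0 cj (ltW xi).
move=> hi hj.
have ijB : i \notin j |: B by rewrite in_setU1 negb_or eq_sym ji.
have [ci' yi' _] := update q PM ijB.
rewrite -(nmulr_rgt0 _ ci') -yi' (_ : Ainvq M q (j |: B) i 0 = Ainvq M q B i 0 -
     Ainvq M (- col j M) B i 0 * Ainvq M q (j |: B) j 0); last by rewrite yr' // addrK.
have yip : 0 < Ainvq M q B i 0 by rewrite yi nmulr_rgt0.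
rewrite subr_gt0; apply: (le_lt_trans _ yip); exact: mulr_ge0_le0 (ltW hj).
Qed.

Lemma Bset_flip (u : vertex n) i : u i = false -> Bset (flip u i) = i |: Bset u.
Proof.
move=> ui; apply/setP => t; rewrite !inE ffunE.
by case: (eqVneq t i) => [->|] //=; rewrite ui.
Qed.

Lemma K_LU (M : 'M[R]_n) q : K_matrix M -> locally_uniform (lcp_orientation M q).
Proof.
move=> KM u i j ij ui uj; rewrite /lcp_orientation.
have iB : i \notin Bset u by rewrite inE ui.
have jB : j \notin Bset u by rewrite inE uj.
have ji : j != i by rewrite eq_sym.
have uij : flip u i j = false by rewrite ffunE (negbTE ji).
rewrite !Bset_flip //.
have [h1 h2] := half q KM iB jB ij.
have [h1' h2'] := half q KM jB iB ji.
split; first by move=> a b; split; [apply: h1 | apply: h1'].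
move=> a b; split; first exact: h2'.
by rewrite setUCA; apply: h2.
Qed.

Definition qpoly (M : 'M[R]_n) (q0 : 'cV[R]_n) (B : {set 'I_n}) (k : 'I_n) : {poly R} :=
  \sum_(l < n) (invmx (A_mat M B) k l *: 'X^(l.+1)) + ((invmx (A_mat M B) *m q0) k 0)%:P.

Lemma qpoly_eval M q0 B k t :
  (qpoly M q0 B k).[t] = Ainvq M (\col_l (q0 l 0 + t ^+ l.+1)) B k 0.
Proof.
rewrite /qpoly /Ainvq hornerD horner_sum hornerC !mxE.
rewrite [RHS](eq_bigr (fun l => invmx (A_mat M B) k l * q0 l 0 +
   invmx (A_mat M B) k l * t ^+ l.+1)); last by move=> l _; rewrite mxE mulrDr.
rewrite big_split /= addrC; congr (_ + _).
by apply: eq_bigr => l _; rewrite hornerZ hornerXn.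
Qed.

Lemma qpoly_neq0 M q0 B k : P_matrix M -> qpoly M q0 B k != 0.
Proof.
move=> PM; set W := invmx (A_mat M B).
have [l Wl] : exists l, W k l != 0.
  apply/existsP; apply: contraT; rewrite negb_exists => /forallP H.
  have := congr1 (fun X : 'M[R]_n => X k k) (mulVmx (A_unit B PM)).
  rewrite !mxE eqxx big1 => [/eqP|t _]; first by rewrite eq_sym oner_eq0.
  by have /negPn/eqP -> := H t; rewrite mul0r.
apply: contra Wl => /eqP H; have := congr1 (fun p : {poly R} => p`_l.+1) H.
rewrite coef0 coefD coefC /= addr0 coef_sum => <-.
rewrite (bigD1 l) //= coefZ coefXn eqxx mulr1 big1 ?addr0 // => t tl.
by rewrite coefZ coefXn eqSS (inj_eq val_inj) eq_sym (negbTE tl) mulr0.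
Qed.

Lemma generic (M : 'M[R]_n) (q0 : 'cV[R]_n) (d : R) : P_matrix M -> 0 < d ->
  exists t, [/\ 0 < t, t < d & lcp_nondegenerate M (\col_l (q0 l 0 + t ^+ l.+1))].
Proof.
move=> PM d0.
pose P := \prod_(B : {set 'I_n}) \prod_(k : 'I_n) qpoly M q0 B k.
have P0 : P != 0.
  apply/prodf_neq0 => B _; apply/prodf_neq0 => k _; exact: qpoly_neq0.
pose s := [seq d / (m.+2)%:R | m <- iota 0 (size P)].
have us : uniq s.
  rewrite map_inj_uniq ?iota_uniq // => a b /(mulfI (lt0r_neq0 d0)).
  by move/invr_inj/eqP; rewrite eqr_nat eqSS => /eqP[].
have : ~~ all (root P) s.
  apply/negP => H; have := max_poly_roots P0 H us.
  by rewrite size_map size_iota ltnn.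
case/allPn => t /mapP[m _ ->] Pt.
exists (d / (m.+2)%:R); split.
- by rewrite divr_gt0 // ltr0n.
- by rewrite ltr_pdivrMr ?ltr0n // ltr_pMr // ltr1n.
move=> B k; rewrite -qpoly_eval.
move: Pt; rewrite rootE /P horner_prod => /prodf_neq0/(_ B isT).
by rewrite horner_prod => /prodf_neq0/(_ k isT).
Qed.
End Aux.

Lemma pow_le (R : realFieldType) (t : R) (l : nat) : 0 < t -> t < 1 -> t ^+ l.+1 <= t.
Proof.
move=> t0 t1; rewrite exprSr; apply: ler_piMl; first exact: ltW.
by apply: exprn_ile1; [exact: ltW | exact: ltW].
Qed.

Theorem mainTheorem7 (R : realFieldType) (n : nat) (M : 'M[R]_n) :
  P_matrix M ->
  (K_matrix M <->
   forall q : 'cV[R]_n, lcp_nondegenerate M q -> locally_uniform (lcp_orientation M q)).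
Proof.
move=> PM; split; first by move=> KM q _; exact: K_LU.
move=> H; split => // j i ji; rewrite leNgt; apply/negP => bpos.
set b := M j i in bpos.
have ij : i != j by rewrite eq_sym.
have i0 : i \notin (set0 : {set 'I_n}) by rewrite in_set0.
have apos : 0 < M i i.
  have [ci _ _] := update 0 PM i0.
  by move: ci; rewrite Ainvq0 !mxE oppr_lt0.
set a := M i i in apos.
pose d := Order.min 1 (Order.min a b).
have d0 : 0 < d by rewrite lt_min ltr01 lt_min apos bpos.
pose q0 : 'cV[R]_n := \col_l (if l == i then - (a *+ 2) else if l == j then - b else 0).
have [t [t0 td nd]] := generic q0 PM d0.
move: td; rewrite !lt_min => /and3P[t1 ta tb].
set qt := \col_l (q0 l 0 + t ^+ l.+1) in nd.
pose u : vertex n := [ffun => false].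
have Bu : Bset u = set0 by apply/setP => l; rewrite !inE ffunE.
have ui : u i = false by rewrite ffunE.
have uj : u j = false by rewrite ffunE.
have [LU1 _] := H qt nd u i j ij ui uj.
have qi : qt i 0 = - (a *+ 2) + t ^+ i.+1 by rewrite !mxE eqxx.
have qj : qt j 0 = - b + t ^+ j.+1 by rewrite !mxE (negbTE ji) eqxx.
have ei := pow_le i t0 t1.
have ej := pow_le j t0 t1.
have ejp : 0 < t ^+ j.+1 := exprn_gt0 _ t0.
have qilt : qt i 0 < - a.
  rewrite qi; apply: (@lt_le_trans _ _ (- (a *+ 2) + a)).
    by rewrite ltrD2l; apply: le_lt_trans ei ta.
  by rewrite mulr2n opprD subrK.
have qjgt : - b < qt j 0 by rewrite qj ltrDl.
have [oi oj] : lcp_orientation M qt u i /\ lcp_orientation M qt u j.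
  rewrite /lcp_orientation Bu !Ainvq0; split.
    by apply: lt_trans qilt _; rewrite oppr_lt0.
  by rewrite qj addrC subr_lt0; apply: le_lt_trans ej tb.
have [LU _] := LU1 oi oj.
move: LU; rewrite /lcp_orientation Bset_flip // Bu.
have [_ yi yr] := update qt PM i0.
move: yi (yr j ji); set xi := Ainvq M qt (i |: set0) i 0; set xj := Ainvq M qt (i |: set0) j 0.
rewrite !Ainvq0 !mxE -/a -/b => Yi Yr xjn.
rewrite !eqxx (negbTE ji) -qi -qj in Yi Yr.
have hx : xj = qt j 0 + b * xi by rewrite Yr mulNr subrK.
have hax : a * xi = - qt i 0 by rewrite Yi mulNr opprK.
have : 0 < a * xj.
  rewrite hx mulrDr mulrCA hax mulrN subr_gt0.
  apply: (@lt_trans _ _ (- (a * b))).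
    by rewrite (mulrC a) -mulrN ltr_pM2l.
  by rewrite -mulrN ltr_pM2l.
rewrite pmulr_rgt0 // => xjp.
by have := lt_trans xjn xjp; rewrite ltxx.
Qed.
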